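(* If $a_1,a_2,a_3,a_4\ge2$ and $D=a_1+a_2+a_3+a_4$, then the leading term of $V_3(x_1^{a_1}x_2^{a_2}x_1^{a_3}x_2^{a_4})$ is $+s^{3D-4}$.
   Context: $\mathcal{B}_3$ is the 3-strand braid group with Artin generators $x_1,x_2$; $V_3(\beta)$ is the Jones polynomial of the closure of $\beta$, normalized by $V(\text{unknot})=1$ and $q^{-1}V_{L_+}-qV_{L_-}=(q^{1/2}-q^{-1/2})V_{L_0}$, written as a Laurent polynomial in $s=q^{-1/2}$. Conventions: closures of $\alpha x_i^{e+2}\gamma$, $\alpha x_i^{e+1}\gamma$, $\alpha x_i^{e}\gamma$ play the roles of $L_-,L_0,L_+$ (e.g. the closure of $x_1^2\in\mathcal B_2$ has Jones polynomial $-s-s^5$). The leading term is the term of highest degree in $s$. *)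

(* Defs.v *)
(* Jones polynomial of closures of 3-braids, via the
   Kauffman bracket computed in the Temperley--Lieb algebra TL_3. *)
From mathcomp Require Import all_boot all_order all_algebra.
Set Implicit Arguments. Unset Strict Implicit. Unset Printing Implicit Defensive.
Import Order.TTheory GRing.Theory Num.Theory.
Local Open Scope ring_scope.

(* Laur k p represents A^k * p(A). *)
Record laurent := Laur { lsh : int; lp : {poly int} }.

Definition lcoef (f : laurent) (k : int) : int :=
  if lsh f <= k then (lp f)`_(absz (k - lsh f)) else 0.

Definition ladd (f g : laurent) : laurent :=
  let m := Order.min (lsh f) (lsh g) in
  Laur m (lp f * 'X^(absz (lsh f - m)) + lp g * 'X^(absz (lsh g - m))).

Definition lmul (f g : laurent) : laurent := Laur (lsh f + lsh g) (lp f * lp g).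

Definition lmono (k : int) (c : int) : laurent := Laur k c%:P.

Definition lzero : laurent := lmono 0 0.

Definition loopd : laurent := ladd (lmono 2 (-1)) (lmono (-2) (-1)).

(* ---------- TL_3 with basis 1, e1, e2, e1e2, e2e1 ---------- *)
Record tl3 := TL3 { t0 : laurent; t1 : laurent; t2 : laurent; t12 : laurent; t21 : laurent }.

Definition tl_one : tl3 := TL3 (lmono 0 1) lzero lzero lzero lzero.

(* right multiplication by e1 and by e2, using e_i^2 = d e_i, e_i e_j e_i = e_i *)
Definition tl_re1 (v : tl3) : tl3 :=
  TL3 lzero (ladd (ladd (t0 v) (lmul loopd (t1 v))) (t12 v)) lzero lzero
      (ladd (t2 v) (lmul loopd (t21 v))).
Definition tl_re2 (v : tl3) : tl3 :=
  TL3 lzero lzero (ladd (ladd (t0 v) (lmul loopd (t2 v))) (t21 v))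
      (ladd (t1 v) (lmul loopd (t12 v))) lzero.

Definition tl_add (v w : tl3) : tl3 :=
  TL3 (ladd (t0 v) (t0 w)) (ladd (t1 v) (t1 w)) (ladd (t2 v) (t2 w))
      (ladd (t12 v) (t12 w)) (ladd (t21 v) (t21 w)).
Definition tl_scale (c : laurent) (v : tl3) : tl3 :=
  TL3 (lmul c (t0 v)) (lmul c (t1 v)) (lmul c (t2 v)) (lmul c (t12 v)) (lmul c (t21 v)).

(* Markov trace = Kauffman bracket of the closure (d^(#loops - 1)):
   tr 1 = d^2, tr e1 = tr e2 = d, tr e1e2 = tr e2e1 = 1 *)
Definition tl_tr (v : tl3) : laurent :=
  ladd (ladd (lmul (lmul loopd loopd) (t0 v)) (lmul loopd (ladd (t1 v) (t2 v))))
       (ladd (t12 v) (t21 v)).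

(* a letter (g, pos): g = false is x_1, g = true is x_2; pos = false means inverse *)
Definition letter := (bool * bool)%type.
Definition x1 : letter := (false, true).
Definition x2 : letter := (true, true).

(* Kauffman bracket images: x_i |-> A + A^-1 e_i, x_i^-1 |-> A^-1 + A e_i *)
Definition tl_step (v : tl3) (l : letter) : tl3 :=
  let e := if l.1 then tl_re2 v else tl_re1 v in
  if l.2 then tl_add (tl_scale (lmono 1 1) v) (tl_scale (lmono (-1) 1) e)
  else tl_add (tl_scale (lmono (-1) 1) v) (tl_scale (lmono 1 1) e).

Definition writhe (w : seq letter) : int :=
  (count (fun l : letter => l.2) w)%:Z - (count (fun l : letter => ~~ l.2) w)%:Z.

(* normalized bracket (-A^3)^(-writhe) <closure>, a Laurent polynomial in A *)
Definition jones_A (w : seq letter) : laurent :=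
  lmul (lmono (- (3%:Z * writhe w)) ((-1) ^+ absz (writhe w)))
       (tl_tr (foldl tl_step tl_one w)).

(* V_3(w), as the coefficient function k |-> [s^k] V_3(w), where s = A^-2
   (so s = t^(1/2) for the standard Jones variable t when x_i is read as a
   positive crossing; this matches the paper's convention, in which x_i plays
   the role of a negative crossing and s = q^(-1/2)). *)
Definition V3coef (w : seq letter) (k : int) : int := lcoef (jones_A w) (- (2%:Z * k)).

Definition leading_term (w : seq letter) (c : int) (n : int) : Prop :=
  V3coef w n = c /\ forall k : int, n < k -> V3coef w k = 0.

(* Main.v *)
Require Import Defs.
From mathcomp Require Import all_boot all_order all_algebra.
From mathcomp Require Import zify ring.
Set Implicit Arguments. Unset Strict Implicit. Unset Printing Implicit Defensive.
Import Order.TTheory GRing.Theory Num.Theory.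
Local Open Scope ring_scope.


Lemma coef_shift (p : {poly int}) (s m k : int) : m <= s -> m <= k ->
  (p * 'X^(absz (s - m)))`_(absz (k - m)) = if s <= k then p`_(absz (k - s)) else 0.
Proof.
move=> hs hk; rewrite coefMXn.
have -> : (absz (k - m) < absz (s - m))%N = ~~ (s <= k) by lia.
case: (boolP (s <= k)) => h //=.
have -> : (absz (k - m) - absz (s - m))%N = absz (k - s) by lia.
by [].
Qed.

Lemma lcoef_add f g k : lcoef (ladd f g) k = lcoef f k + lcoef g k.
Proof.
rewrite /lcoef /ladd /=.
set m := Order.min (lsh f) (lsh g).
have hf : m <= lsh f by rewrite ge_min lexx.
have hg : m <= lsh g by rewrite ge_min lexx orbT.
case: ifP => hk.
  by rewrite coefD !coef_shift.
have h1 : (lsh f <= k) = false by apply/negbTE; move/negbT: hk; rewrite -!ltNge; move=> h; exact: lt_le_trans h hf.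
have h2 : (lsh g <= k) = false by apply/negbTE; move/negbT: hk; rewrite -!ltNge; move=> h; exact: lt_le_trans h hg.
by rewrite h1 h2 addr0.
Qed.

Definition low (f : laurent) (n c : int) : Prop :=
  (forall k, k < n -> lcoef f k = 0) /\ lcoef f n = c.

Lemma low_add f g n c c' : low f n c -> low g n c' -> low (ladd f g) n (c + c').
Proof.
move=> [h1 h2] [h3 h4]; split; last by rewrite lcoef_add h2 h4.
by move=> k hk; rewrite lcoef_add h1 // h3 // addr0.
Qed.

Lemma low_lt f n c m : low f n c -> m < n -> low f m 0.
Proof.
move=> [h1 h2] hm; split; last exact: h1.
move=> k hk; apply: h1; exact: lt_trans hk hm.
Qed.

Lemma low_le0 f n m : low f n 0 -> m <= n -> low f m 0.
Proof.
move=> h; rewrite le_eqVlt => /orP [/eqP -> // | hm]; exact: low_lt h hm.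
Qed.

Lemma low_mono k c : low (lmono k c) k c.
Proof.
rewrite /low /lcoef /=; split.
  by move=> j hj; rewrite lt_geF.
by rewrite lexx subrr /= coefC.
Qed.

Lemma low_zero n : low lzero n 0.
Proof.
by rewrite /low /lcoef /=; split => [k _|]; rewrite coefC; case: ifP => //; case: (_ == _).
Qed.

Lemma low_poly f n c : lsh f <= n -> low f n c ->
  exists q, lp f = q * 'X^(absz (n - lsh f)) /\ q`_0 = c.
Proof.
move=> hn [h1 h2].
set t := absz (n - lsh f).
exists (drop_poly t (lp f)); split; last first.
  rewrite coef_drop_poly add0n -h2 /lcoef hn //.
have ht : take_poly t (lp f) = 0.
  apply/polyP => i; rewrite coef_take_poly coef0; case: ifP => hi //.
  have := h1 (lsh f + (Posz i)); rewrite /lcoef.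
  have -> : lsh f <= lsh f + (Posz i) by lia.
  have -> : absz ((lsh f + (Posz i) - lsh f)%R) = i by lia.
  by apply; lia.
by rewrite -{1}(poly_take_drop t (lp f)) ht add0r.
Qed.

Lemma low_mul_main f g n m c c' : lsh f <= n -> lsh g <= m ->
  low f n c -> low g m c' -> low (lmul f g) (n + m) (c * c').
Proof.
move=> hf hg lf lg.
have [qf [ef cf]] := low_poly hf lf.
have [qg [eg cg]] := low_poly hg lg.
have E : lp (lmul f g) = (qf * qg) * 'X^(absz (n - lsh f) + absz (m - lsh g)).
  by rewrite /= ef eg exprD mulrACA.
split.
  move=> k hk; rewrite /lcoef E; case: ifP => // h.
  rewrite /= in h.
  rewrite coefMXn /=; case: ifP => // /negbT hh; exfalso; lia.
rewrite /lcoef E /=.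
have -> : lsh f + lsh g <= n + m by lia.
rewrite coefMXn.
set A := absz ((n + m - (lsh f + lsh g))%R).
set B := absz ((n - lsh f)%R). set C := absz ((m - lsh g)%R).
have -> : (A < B + C)%N = false by rewrite /A /B /C; lia.
have -> : (A - (B + C))%N = 0%N by rewrite /A /B /C; lia.
by rewrite coef0M cf cg.
Qed.

Lemma low_self f : low f (lsh f) (lcoef f (lsh f)).
Proof. by split => // k hk; rewrite /lcoef lt_geF. Qed.

Lemma low_below f n c : n < lsh f -> low f n c -> c = 0.
Proof. by move=> h [_ <-]; rewrite /lcoef lt_geF. Qed.

Lemma low_mul f g n m c c' :
  low f n c -> low g m c' -> low (lmul f g) (n + m) (c * c').
Proof.
move=> lf lg.
case: (leP (lsh f) n) => hf; case: (leP (lsh g) m) => hg.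
- exact: low_mul_main.
- rewrite (low_below hg lg) mulr0.
  apply: (low_lt (low_mul_main hf (lexx _) lf (low_self g))); lia.
- rewrite (low_below hf lf) mul0r.
  apply: (low_lt (low_mul_main (lexx _) hg (low_self f) lg)); lia.
- rewrite (low_below hf lf) mul0r.
  apply: (low_lt (low_mul_main (lexx _) (lexx _) (low_self f) (low_self g))); lia.
Qed.


Lemma low_conv f n c n' c' : low f n c -> n = n' -> c = c' -> low f n' c'.
Proof. by move=> h <- <-. Qed.

Lemma low_addE f g n m c c' : low f n c -> low g m c' -> m = n -> low (ladd f g) n (c + c').
Proof. by move=> h1 h2 e; apply: low_add h1 _; rewrite -e. Qed.

Lemma low_d : low loopd (-2) (-1).
Proof.
apply: (low_conv (low_add (low_lt (low_mono 2 (-1)) (_ : -2 < 2)) (low_mono (-2) (-1)))) => //.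
Qed.

Lemma low_dmul x n c : low x n c -> low (lmul loopd x) (n - 2) (- c).
Proof.
move=> h; apply: (low_conv (low_mul low_d h)); [ring | ring].
Qed.

Lemma low_shift x n c :
  low x n c -> low (ladd (lmul (lmono 1 1) x) (lmul (lmono (-1) 1) lzero)) (n + 1) c.
Proof.
move=> h; have h1 := low_mul (low_mono 1 1) h.
have h2 := low_mul (low_mono (-1) 1) (low_zero (n + 2)).
apply: (low_conv (low_addE h1 h2 _)); ring.
Qed.

Lemma low_step x n c S m e : low x n c -> low S m e -> m < n + 2 ->
  low (ladd (lmul (lmono 1 1) x) (lmul (lmono (-1) 1) S)) (m - 1) e.
Proof.
move=> hx hS hm.
have h1 := low_lt (low_mul (low_mono 1 1) hx) (_ : m - 1 < 1 + n).
have h2 := low_mul (low_mono (-1) 1) hS.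
apply: (low_conv (low_addE (h1 _) h2 _)); try ring; lia.
Qed.

Lemma nseq_rcons T n (x : T) : nseq n.+1 x = rcons (nseq n x) x.
Proof. by elim: n => //= n ->. Qed.

Definition lows5 v n0 c0 n1 c1 n2 c2 n12 c12 n21 c21 :=
  [/\ low (t0 v) n0 c0, low (t1 v) n1 c1, low (t2 v) n2 c2, low (t12 v) n12 c12 & low (t21 v) n21 c21].

Lemma block1 v (b : nat) n0 c0 n1 c1 n2 c2 n12 c12 n21 c21 p c q c' :
  lows5 v n0 c0 n1 c1 n2 c2 n12 c12 n21 c21 ->
  low (ladd (ladd (t0 v) (lmul loopd (t1 v))) (t12 v)) p c ->
  low (ladd (t2 v) (lmul loopd (t21 v))) q c' ->
  p <= n0 -> p <= n1 - 2 -> p <= n12 -> q <= n2 -> q <= n21 - 2 ->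
  lows5 (foldl tl_step v (nseq b.+1 x1))
    (n0 + b%:Z + 1) c0 (p - 3 * b%:Z - 1) ((-1) ^+ b * c)
    (n2 + b%:Z + 1) c2 (n12 + b%:Z + 1) c12 (q - 3 * b%:Z - 1) ((-1) ^+ b * c').
Proof.
move=> [h0 h1 h2 h12 h21] hS hQ i1 i2 i3 i4 i5.
elim: b => [|b [w0 w1 w2 w12 w21]].
  split => /=.
  - apply: (low_conv (low_shift h0)); lia.
  - apply: (low_conv (low_step h1 hS _)); [lia | lia | ring].
  - apply: (low_conv (low_shift h2)); lia.
  - apply: (low_conv (low_shift h12)); lia.
  - apply: (low_conv (low_step h21 hQ _)); [lia | lia | ring].
rewrite nseq_rcons foldl_rcons.
set w := foldl _ _ _ in w0 w1 w2 w12 w21 *.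
split => /=.
- apply: (low_conv (low_shift w0)); lia.
- have e1 := low_lt w0 (_ : p - 3 * b%:Z - 3 < n0 + b%:Z + 1).
  have e2 := low_dmul w1.
  have e3 := low_lt w12 (_ : p - 3 * b%:Z - 3 < n12 + b%:Z + 1).
  have eS := low_addE (low_addE (e1 _) e2 _) (e3 _) (erefl _).
  apply: (low_conv (low_step w1 (eS _ _ _) _)); try lia.
  rewrite exprS; ring.
- apply: (low_conv (low_shift w2)); lia.
- apply: (low_conv (low_shift w12)); lia.
- have e2 := low_lt w2 (_ : q - 3 * b%:Z - 3 < n2 + b%:Z + 1).
  have e3 := low_dmul w21.
  have eS := low_addE (e2 _) e3 _.
  apply: (low_conv (low_step w21 (eS _ _) _)); try lia.
  rewrite exprS; ring.
Qed.

Lemma block2 v (b : nat) n0 c0 n1 c1 n2 c2 n12 c12 n21 c21 p c q c' :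
  lows5 v n0 c0 n1 c1 n2 c2 n12 c12 n21 c21 ->
  low (ladd (ladd (t0 v) (lmul loopd (t2 v))) (t21 v)) p c ->
  low (ladd (t1 v) (lmul loopd (t12 v))) q c' ->
  p <= n0 -> p <= n2 - 2 -> p <= n21 -> q <= n1 -> q <= n12 - 2 ->
  lows5 (foldl tl_step v (nseq b.+1 x2))
    (n0 + b%:Z + 1) c0 (n1 + b%:Z + 1) c1 (p - 3 * b%:Z - 1) ((-1) ^+ b * c)
    (q - 3 * b%:Z - 1) ((-1) ^+ b * c') (n21 + b%:Z + 1) c21.
Proof.
move=> [h0 h1 h2 h12 h21] hS hQ i1 i2 i3 i4 i5.
elim: b => [|b [w0 w1 w2 w12 w21]].
  split => /=.
  - apply: (low_conv (low_shift h0)); lia.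
  - apply: (low_conv (low_shift h1)); lia.
  - apply: (low_conv (low_step h2 hS _)); [lia | lia | ring].
  - apply: (low_conv (low_step h12 hQ _)); [lia | lia | ring].
  - apply: (low_conv (low_shift h21)); lia.
rewrite nseq_rcons foldl_rcons.
set w := foldl _ _ _ in w0 w1 w2 w12 w21 *.
split => /=.
- apply: (low_conv (low_shift w0)); lia.
- apply: (low_conv (low_shift w1)); lia.
- have e1 := low_lt w0 (_ : p - 3 * b%:Z - 3 < n0 + b%:Z + 1).
  have e2 := low_dmul w2.
  have e3 := low_lt w21 (_ : p - 3 * b%:Z - 3 < n21 + b%:Z + 1).
  have eS := low_addE (low_addE (e1 _) e2 _) (e3 _) (erefl _).
  apply: (low_conv (low_step w2 (eS _ _ _) _)); try lia.
  rewrite exprS; ring.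
- have e2 := low_lt w1 (_ : q - 3 * b%:Z - 3 < n1 + b%:Z + 1).
  have e3 := low_dmul w12.
  have eS := low_addE (e2 _) e3 _.
  apply: (low_conv (low_step w12 (eS _ _) _)); try lia.
  rewrite exprS; ring.
- apply: (low_conv (low_shift w21)); lia.
Qed.


Lemma sgn2 (b : nat) : (-1)^+b * (-1)^+b = 1 :> int.
Proof. by rewrite -exprD addnn -mul2n exprM sqrrN expr1n. Qed.

Lemma low_dz x n : low x n 0 -> low (lmul loopd x) (n - 2) 0.
Proof. by move=> h; apply: (low_conv (low_dmul h)). Qed.

Theorem main (b1 b2 b3 b4 : nat) :
  (1 <= b1)%N -> (1 <= b2)%N -> (1 <= b3)%N -> (1 <= b4)%N ->
  let w := nseq b1.+1 x1 ++ nseq b2.+1 x2 ++ nseq b3.+1 x1 ++ nseq b4.+1 x2 in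
  low (tl_tr (foldl tl_step tl_one w))
      (- 3 * (b1 + b2 + b3 + b4)%:Z - 4) ((-1) ^+ (b1 + b2 + b3 + b4)).
Proof.
move=> h1 h2 h3 h4 w.
rewrite /w !foldl_cat.
set K : int := 4 * (b1 + b2 + b3 + b4 + 4)%:Z.
have s0 : lows5 tl_one 0 1 K 0 K 0 K 0 (K + 2) 0.
  by split; rewrite /=; [exact: low_mono | exact: low_zero ..].
have S1 : low (ladd (ladd (t0 tl_one) (lmul loopd (t1 tl_one))) (t12 tl_one)) 0 1.
  have e1 := low_le0 (low_dz (low_zero K)) (_ : 0 <= K - 2).
  have e2 := low_le0 (low_zero K) (_ : 0 <= K).
  apply: (low_conv (low_add (low_add (low_mono 0 1) (e1 _)) (e2 _))); try lia; ring.
have Q1 : low (ladd (t2 tl_one) (lmul loopd (t21 tl_one))) K 0.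
  apply: (low_conv (low_addE (low_zero K) (low_dz (low_zero (K + 2))) _)); try lia; ring.
have [v10 v11 v12 v112 v121] := block1 b1 s0 S1 Q1 ltac:(lia) ltac:(lia) ltac:(lia) ltac:(lia) ltac:(lia).
set v1 := foldl _ _ (nseq _ _) in v10 v11 v12 v112 v121 *.
have S2 : low (ladd (ladd (t0 v1) (lmul loopd (t2 v1))) (t21 v1)) (0 + b1%:Z + 1) 1.
  have e1 := low_le0 (low_dz v12) (_ : 0 + b1%:Z + 1 <= _).
  have e2 := low_le0 (low_conv v121 (erefl _) (_ : _ = 0)) (_ : 0 + b1%:Z + 1 <= _).
  apply: (low_conv (low_add (low_add v10 (e1 _)) (e2 _ _))); try lia; ring.
have Q2 : low (ladd (t1 v1) (lmul loopd (t12 v1))) (0 - 3 * b1%:Z - 1) ((-1) ^+ b1 * 1).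
  have e1 := low_le0 (low_dz v112) (_ : 0 - 3 * b1%:Z - 1 <= _).
  apply: (low_conv (low_add v11 (e1 _))); try lia; ring.
have [v20 v21 v22 v212 v221] := block2 b2 (And5 v10 v11 v12 v112 v121) S2 Q2 ltac:(lia) ltac:(lia) ltac:(lia) ltac:(lia) ltac:(lia).
set v2 := foldl _ v1 _ in v20 v21 v22 v212 v221 *.
have S3 : low (ladd (ladd (t0 v2) (lmul loopd (t1 v2))) (t12 v2))
   ((0 - 3 * b1%:Z - 1) - 3 * b2%:Z - 1) ((-1) ^+ b2 * ((-1) ^+ b1 * 1)).
  have e1 := low_lt v20 (_ : (0 - 3 * b1%:Z - 1) - 3 * b2%:Z - 1 < _).
  have e2 := low_lt (low_dmul v21) (_ : (0 - 3 * b1%:Z - 1) - 3 * b2%:Z - 1 < _).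
  apply: (low_conv (low_add (low_add (e1 _) (e2 _)) v212)); try lia; ring.
have Q3 : low (ladd (t2 v2) (lmul loopd (t21 v2))) ((0 + b1%:Z + 1) - 3 * b2%:Z - 1) ((-1) ^+ b2 * 1).
  have e1 := low_le0 (low_conv (low_dmul v221) (erefl _) (_ : _ = 0)) (_ : (0 + b1%:Z + 1) - 3 * b2%:Z - 1 <= _).
  apply: (low_conv (low_add v22 (e1 _ _))); try lia; ring.
have [v30 v31 v32 v312 v321] := block1 b3 (And5 v20 v21 v22 v212 v221) S3 Q3 ltac:(lia) ltac:(lia) ltac:(lia) ltac:(lia) ltac:(lia).
set v3 := foldl _ v2 _ in v30 v31 v32 v312 v321 *.
have S4 : low (ladd (ladd (t0 v3) (lmul loopd (t2 v3))) (t21 v3))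
   (((0 + b1%:Z + 1) - 3 * b2%:Z - 1) - 3 * b3%:Z - 1) ((-1) ^+ b3 * ((-1) ^+ b2 * 1)).
  have e1 := low_lt v30 (_ : ((0 + b1%:Z + 1) - 3 * b2%:Z - 1) - 3 * b3%:Z - 1 < _).
  have e2 := low_lt (low_dmul v32) (_ : ((0 + b1%:Z + 1) - 3 * b2%:Z - 1) - 3 * b3%:Z - 1 < _).
  apply: (low_conv (low_add (low_add (e1 _) (e2 _)) v321)); try lia; ring.
have Q4 : low (ladd (t1 v3) (lmul loopd (t12 v3)))
   (((0 - 3 * b1%:Z - 1) - 3 * b2%:Z - 1) - 3 * b3%:Z - 1) ((-1) ^+ b3 * ((-1) ^+ b2 * ((-1) ^+ b1 * 1))).
  have e1 := low_lt (low_dmul v312) (_ : ((0 - 3 * b1%:Z - 1) - 3 * b2%:Z - 1) - 3 * b3%:Z - 1 < _).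
  apply: (low_conv (low_add v31 (e1 _))); try lia; ring.
have [v40 v41 v42 v412 v421] := block2 b4 (And5 v30 v31 v32 v312 v321) S4 Q4 ltac:(lia) ltac:(lia) ltac:(lia) ltac:(lia) ltac:(lia).
set v4 := foldl _ v3 _ in v40 v41 v42 v412 v421 *.
rewrite /tl_tr.
set T := - 3 * (b1 + b2 + b3 + b4)%:Z - 4.
have f1 := low_lt (low_mul (low_mul low_d low_d) v40) (_ : T < _).
have f2 := low_lt v41 (_ : T + 2 < _).
have f3 := low_lt v42 (_ : T + 2 < _).
have f4 := low_mul low_d (low_add (f2 _) (f3 _)).
have f5 := low_lt v421 (_ : T < _).
have f6 := low_conv v412 (_ : _ = T) (erefl _).
apply: (low_conv (low_addE (low_addE (f1 _) (f4 _ _) _) (low_add (f6 _) (f5 _)) (erefl _))); try lia.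
rewrite !exprD; ring.
Qed.

Unset Implicit Arguments.


Theorem proposition4p4 (a1 a2 a3 a4 : nat) :
  (2 <= a1)%N -> (2 <= a2)%N -> (2 <= a3)%N -> (2 <= a4)%N ->
  let D : nat := (a1 + a2 + a3 + a4)%N in
  leading_term (nseq a1 x1 ++ nseq a2 x2 ++ nseq a3 x1 ++ nseq a4 x2)
               1 (3%:Z * D%:Z - 4%:Z).
Proof.
case: a1 => // b1 h1; case: a2 => // b2 h2; case: a3 => // b3 h3; case: a4 => // b4 h4 D.
have hw := main h1 h2 h3 h4.
set w := (nseq _ x1 ++ _) in hw *.
have ew : writhe w = D%:Z.
  rewrite /writhe /w !count_cat !count_nseq /= /D; lia.
have hj := low_mul (low_mono (-(3%:Z * writhe w)) ((-1) ^+ absz (writhe w))) hw.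
have hj' : low (jones_A w) (- (2%:Z * (3%:Z * D%:Z - 4%:Z))) 1.
  apply: (low_conv hj); rewrite ew /D; first lia.
  rewrite /=.
  have -> : (b1.+1 + b2.+1 + b3.+1 + b4.+1 = (b1 + b2 + b3 + b4) + 4)%N by lia.
  rewrite exprD (_ : (-1) ^+ 4 = 1 :> int) //.
  by rewrite mulr1 sgn2.
split; first exact: hj'.2.
move=> k hk; rewrite /V3coef; apply: hj'.1; lia.
Qed.
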